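(* Let $t\ge 3$ and $d\ge 0$ be integers. Every graph $G$ with $\mathrm{tww}(G)\le d$ that contains no clique on $t$ vertices admits a proper vertex coloring with at most $(d+2)^{t-2}$ colors. In particular, every class of graphs of bounded twin-width is $\chi$-bounded.
   Context: A class $\mathcal C$ of graphs is $\chi$-bounded if there is a function $f$ with $\chi(G)\le f(\omega(G))$ for all $G\in\mathcal C$, where $\chi$ is the chromatic number and $\omega$ the clique number. A trigraph $H$ consists of a vertex set $V(H)$ and two disjoint sets of unordered pairs of distinct vertices: black edges $E(H)$ and red edges $R(H)$. Two vertices are adjacent (neighbors) if they are joined by a black or a red edge. The red graph of $H$ is the graph $(V(H),R(H))$; $H$ is a $d$-trigraph if its red graph has maximum degree at most $d$. A graph is a trigraph with no red edges. Contracting two distinct vertices $u,v$ of a trigraph $H$ yields the trigraph obtained by deleting $u$ and $v$ and adding a new vertex $z$ such that, for every other vertex $x$: $zx$ is a black edge if both $ux$ and $vx$ are black edges; $zx$ is not an edge if $x$ is adjacent to neither $u$ nor $v$; and $zx$ is a red edge otherwise. All edges not incident to $u$ or $v$ are unchanged. A $d$-sequence of an $n$-vertex graph $G$ is a sequence of $d$-trigraphs $G=G_n,G_{n-1},\dots,G_1$ such that $G_1$ has a single vertex and each $G_{i-1}$ is obtained from $G_i$ by one contraction (so $G_i$ has $i$ vertices). The twin-width $\mathrm{tww}(G)$ of $G$ is the minimum $d$ such that $G$ admits a $d$-sequence. *)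

(* Defs.v *)
From mathcomp Require Import all_boot.
Set Warnings "-notation-overridden".
Set Implicit Arguments. Unset Strict Implicit. Unset Printing Implicit Defensive.

Definition simple_graph (V : finType) (e : rel V) : Prop :=
  symmetric e /\ irreflexive e.

(* Trigraphs whose vertices are named by elements of a finite type T.
   tv = vertex set, tb = black edges, tr = red edges (only their values on
   pairs of vertices of tv matter). *)
Record trigraph (T : finType) := Trigraph {
  tv : {set T};
  tb : rel T;
  tr : rel T }.

Definition wf_trigraph (T : finType) (H : trigraph T) : Prop :=
  forall x y, x \in tv H -> y \in tv H ->
    [/\ tb H x y = tb H y x, tr H x y = tr H y x, ~~ tb H x x, ~~ tr H x x
      & ~~ (tb H x y && tr H x y)].

Definition tadj (T : finType) (H : trigraph T) (x y : T) : bool :=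
  tb H x y || tr H x y.

Definition d_trigraph (T : finType) (d : nat) (H : trigraph T) : Prop :=
  forall x, x \in tv H -> #|[set y in tv H | tr H x y]| <= d.

Definition contraction (T : finType) (H : trigraph T) (u v : T)
  (H' : trigraph T) : Prop :=
  exists z : T,
  [/\ u \in tv H, v \in tv H, u != v,
      z \notin (tv H :\ u :\ v) & tv H' = z |: (tv H :\ u :\ v)] /\
  [/\
      (forall x y, x \in tv H :\ u :\ v -> y \in tv H :\ u :\ v ->
          tb H' x y = tb H x y /\ tr H' x y = tr H x y) &
      (forall x, x \in tv H :\ u :\ v ->
          [/\ tb H' z x = tb H u x && tb H v x,
              tb H' x z = tb H u x && tb H v x,
              tr H' z x = ~~ (tb H u x && tb H v x) && (tadj H u x || tadj H v x)
            & tr H' x z = ~~ (tb H u x && tb H v x) && (tadj H u x || tadj H v x)])].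

(* A graph seen as a trigraph without red edges; vertices are named by the
   singletons {x}, x : V (vertex names of trigraphs in a sequence live in
   {set V}). *)
Definition graph_trigraph (V : finType) (e : rel V) : trigraph {set V} :=
  Trigraph [set [set x] | x : V]
    (fun A B => [exists x, exists y, [&& A == [set x], B == [set y] & e x y]])
    (fun _ _ => false).

Definition has_d_sequence (V : finType) (e : rel V) (d : nat) : Prop :=
  exists H : nat -> trigraph {set V},
  [/\ H #|V| = graph_trigraph e,
      (forall i, 1 <= i <= #|V| ->
         [/\ wf_trigraph (H i), d_trigraph d (H i) & #|tv (H i)| = i]) &
      (forall i, 1 < i <= #|V| -> exists u v, contraction (H i) u v (H i.-1))].

Definition tww_le (V : finType) (e : rel V) (d : nat) : Prop :=
  has_d_sequence e d.

Definition is_clique (V : finType) (e : rel V) (K : {set V}) : bool :=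
  [forall x in K, forall y in K, (x != y) ==> e x y].

Definition omega (V : finType) (e : rel V) : nat :=
  \max_(K : {set V} | is_clique e K) #|K|.

Definition colorable (V : finType) (e : rel V) (k : nat) : Prop :=
  exists c : V -> 'I_k, forall x y, e x y -> c x != c y.

(* Main.v *)
Require Import Defs.
From mathcomp Require Import all_boot.
From mathcomp Require Import zify.
From Stdlib Require Import ClassicalEpsilon Classical.
Set Warnings "-notation-overridden".
Set Implicit Arguments. Unset Strict Implicit. Unset Printing Implicit Defensive.

Definition valid (V : finType) (e : rel V) (Hi : trigraph {set V})
  (nm : V -> {set V}) : Prop :=
  [/\ forall x, nm x \in tv Hi,
      forall x y, tb Hi (nm x) (nm y) -> e x y &
      forall x y, nm x != nm y -> ~~ tadj Hi (nm x) (nm y) -> ~~ e x y].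

Definition good (V : finType) (e : rel V) (S : {set V}) (s : nat)
  (nm : V -> {set V}) (col : {set V} -> nat) : Prop :=
  forall K : {set V}, K \subset S -> is_clique e K -> #|K| = s ->
    (forall x y, x \in K -> y \in K -> col (nm x) = col (nm y)) ->
    (forall x y, x \in K -> y \in K -> nm x = nm y).

Definition mrg (T : eqType) (u v z : T) (A : T) :=
  if (A == u) || (A == v) then z else A.

Lemma in_rest (T : finType) (A : {set T}) u v a :
  a \in A -> ~~ ((a == u) || (a == v)) -> a \in A :\ u :\ v.
Proof. by rewrite !in_setD1 negb_or => -> /andP[-> ->]. Qed.

Lemma valid_contr (V : finType) (e : rel V) (Hi Hj : trigraph {set V}) u v z nm :
  z \notin tv Hi :\ u :\ v -> tv Hj = z |: (tv Hi :\ u :\ v) ->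
  (forall x y, x \in tv Hi :\ u :\ v -> y \in tv Hi :\ u :\ v ->
          tb Hj x y = tb Hi x y /\ tr Hj x y = tr Hi x y) ->
  (forall x, x \in tv Hi :\ u :\ v ->
          [/\ tb Hj z x = tb Hi u x && tb Hi v x,
              tb Hj x z = tb Hi u x && tb Hi v x,
              tr Hj z x = ~~ (tb Hi u x && tb Hi v x) && (tadj Hi u x || tadj Hi v x)
            & tr Hj x z = ~~ (tb Hi u x && tb Hi v x) && (tadj Hi u x || tadj Hi v x)]) ->
  symmetric e -> wf_trigraph Hj -> valid e Hi nm -> valid e Hj (fun x => mrg u v z (nm x)).
Proof.
move=> znot tvj Hs Hz esym wfj [Htv Hb Hn].
have zin : z \in tv Hj by rewrite tvj setU11.
split.
- move=> x; rewrite /mrg tvj; case: ifP => h; first by rewrite setU11.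
  by rewrite setU1r // in_rest // h.
- move=> x y; rewrite /mrg; case: ifP => hx; case: ifP => hy.
  + by case: (wfj z z zin zin) => _ _ nb _ _; rewrite (negbTE nb).
  + have yr := in_rest (Htv y) (negbT hy).
    case: (Hz _ yr) => -> _ _ _ /andP[bu bv].
    by apply: Hb; case/orP: hx => /eqP ->.
  + have xr := in_rest (Htv x) (negbT hx).
    case: (Hz _ xr) => _ -> _ _ /andP[bu bv].
    by rewrite esym; apply: Hb; case/orP: hy => /eqP ->.
  + have xr := in_rest (Htv x) (negbT hx).
    have yr := in_rest (Htv y) (negbT hy).
    by case: (Hs _ _ xr yr) => -> _; apply: Hb.
- move=> x y; rewrite /mrg; case: ifP => hx; case: ifP => hy.
  + by rewrite eqxx.
  + have yr := in_rest (Htv y) (negbT hy).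
    move=> _; rewrite /tadj. idtac. case: (Hz _ yr) => E1 _ E2 _. rewrite E1 E2.
    case: (tb Hi u (nm y) && tb Hi v (nm y)) => //= /norP [au av].
    apply: Hn; last by case/orP: hx => /eqP ->.
    by apply/negP => /eqP E; move: hy; rewrite -E hx.
  + have xr := in_rest (Htv x) (negbT hx).
    move=> _; rewrite /tadj; case: (Hz _ xr) => _ -> _ ->.
    case: (tb Hi u (nm x) && tb Hi v (nm x)) => //= /norP [au av].
    rewrite esym; apply: Hn; last by case/orP: hy => /eqP ->.
    by apply/negP => /eqP E; move: hx; rewrite -E hy.
  + have xr := in_rest (Htv x) (negbT hx).
    have yr := in_rest (Htv y) (negbT hy).
    by rewrite /tadj; case: (Hs _ _ xr yr) => -> ->; apply: Hn.
Qed.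

Lemma cliqueP (V : finType) (e : rel V) K x y :
  is_clique e K -> x \in K -> y \in K -> x != y -> e x y.
Proof.
move=> /forallP H xK yK nxy.
by move: (H x); rewrite xK /= => /forallP /(_ y); rewrite yK nxy.
Qed.

Lemma clique_add (V : finType) (e : rel V) C y :
  is_clique e C -> (forall a, a \in C -> e a y /\ e y a) -> is_clique e (y |: C).
Proof.
move=> Ccl H; apply/forallP => a; apply/implyP => aC; apply/forallP => b;
apply/implyP => bC; apply/implyP => nab.
move: aC bC nab; rewrite !in_setU1.
case/orP => [/eqP -> | aC]; case/orP => [/eqP -> | bC].
- by rewrite eqxx.
- by case: (H b bC).
- by case: (H a aC).
- exact: cliqueP Ccl aC bC.
Qed.

Lemma mrg_eq (T : finType) (A : {set T}) u v z a b :
  z \notin A :\ u :\ v -> a \in A -> b \in A -> mrg u v z a = mrg u v z b ->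
  a = b \/ (((a == u) || (a == v)) && ((b == u) || (b == v))).
Proof.
move=> zn aA bA; rewrite /mrg; case: ifP => ha; case: ifP => hb.
- by move=> _; right; rewrite ?ha ?hb.

- move=> E; have := in_rest bA (negbT hb); by rewrite -E (negbTE zn).
- move=> E; have := in_rest aA (negbT ha); by rewrite E (negbTE zn).
- by left.
Qed.

Lemma color_contr (V : finType) (e : rel V) d (S : {set V}) (s : nat) (Hi Hj : trigraph {set V}) u v z nm :
  symmetric e -> u != v ->
  z \notin tv Hi :\ u :\ v -> tv Hj = z |: (tv Hi :\ u :\ v) ->
  (forall x, x \in tv Hi :\ u :\ v ->
          [/\ tb Hj z x = tb Hi u x && tb Hi v x,
              tb Hj x z = tb Hi u x && tb Hi v x,
              tr Hj z x = ~~ (tb Hi u x && tb Hi v x) && (tadj Hi u x || tadj Hi v x)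
            & tr Hj x z = ~~ (tb Hi u x && tb Hi v x) && (tadj Hi u x || tadj Hi v x)]) ->
  d_trigraph d Hj -> valid e Hi nm ->
  (forall K : {set V}, K \subset S -> is_clique e K -> #|K| = s.+1 -> False) ->
  (exists col', (forall A, col' A < d.+2) /\ good e S s (fun x => mrg u v z (nm x)) col') ->
  exists col, (forall A, col A < d.+2) /\ good e S s nm col.
Proof.
move=> esym uv znot tvj Hz dj [Htv Hb Hn] noK [col' [colb good']].
have zin : z \in tv Hj by rewrite tvj setU11.
have key : forall x y, mrg u v z (nm x) = mrg u v z (nm y) ->
    nm x = nm y \/ (((nm x == u) || (nm x == v)) && ((nm y == u) || (nm y == v))).
  by move=> x y; apply: (mrg_eq znot (Htv x) (Htv y)).
case: (classic (exists C : {set V}, [/\ C \subset S, is_clique e C, #|C| = s,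
   (forall a, a \in C -> (nm a == u) || (nm a == v)) &
   (exists a b, [/\ a \in C, b \in C, nm a = u & nm b = v])]))
  => [[C [CS Ccl Cs Cuv _]] | nobad].
- have [b [blt bz bR]] : exists b, [/\ b < d.+2, b != col' z &
      forall w, w \in tv Hj -> tr Hj z w -> col' w != b].
    set R := [set w in tv Hj | tr Hj z w].
    set F := col' z :: [seq col' w | w <- enum R].
    have : has (fun b => b \notin F) (iota 0 d.+2).
      apply/negPn/negP => /hasPn Hall.
      have := uniq_leq_size (iota_uniq 0 d.+2) (fun b hb => negbNE (Hall b hb)).
      rewrite size_iota /= size_map -cardE.
      have := dj z zin; rewrite -/R => a b; by rewrite ltnS ltnNge a in b.
    case/hasP => b; rewrite mem_iota => /andP[_ blt] bF; exists b; split => //.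
      by apply/eqP => E; move: bF; rewrite E mem_head.
    move=> w wj wr; apply/eqP => E; move: bF; rewrite -E inE negb_or => /andP[_].
    have wR : w \in R by rewrite inE wj wr.
    by rewrite map_f ?mem_enum.
  exists (fun A => if A == v then b else col' (mrg u v z A)); split.
    by move=> A; case: ifP.
  move=> K KS Kcl Ks mono.
  case: (boolP [exists x0 in K, nm x0 == v]) => [/existsP [x0 /andP [x0K /eqP x0v]] | nov].
  + have allv : forall y, y \in K -> nm y = v.
      move=> y yK; apply/eqP/negPn/negP => ny.
      have := mono x0 y x0K yK; rewrite x0v eqxx (negbTE ny) => cy.
      case: (boolP (nm y == u)) => [/eqP yu | nyu].
        by move: cy; rewrite /mrg yu eqxx /= => cz; rewrite cz eqxx in bz.
      have yr : nm y \in tv Hi :\ u :\ v by apply: in_rest; rewrite ?Htv // negb_or nyu ny.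
      move: cy; rewrite /mrg (negbTE nyu) (negbTE ny) /= => cy.
      have nxy : x0 != y by apply/eqP => E; move: ny; rewrite -E x0v eqxx.
      have exy := cliqueP Kcl x0K yK nxy.
      have adj : tadj Hi v (nm y).
        apply/negPn/negP => nadj.
        have vny : v != nm y by rewrite eq_sym.
        by have := Hn x0 y; rewrite x0v exy => /(_ vny nadj).
      case: (Hz _ yr) => _ _ trz _.
      case: (boolP (tb Hi u (nm y) && tb Hi v (nm y))) => [/andP[bu bv] | nb].
        apply: (noK (y |: C)).
        * by rewrite subUset sub1set (subsetP KS y yK) CS.
        * apply: clique_add => // a aC.
          have ea : e a y by apply: Hb; case/orP: (Cuv a aC) => /eqP ->.
          by split => //; rewrite esym.
        * rewrite cardsU1 Cs; suff -> : y \notin C by [].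
          by apply/negP => yC; have := Cuv y yC; rewrite (negbTE nyu) (negbTE ny).
      have tz : tr Hj z (nm y) by rewrite trz nb /= adj orbT.
      have := bR _ _ tz; rewrite -cy eqxx //.
      move=> Hc; have yj : nm y \in tv Hj by rewrite tvj in_setU1 yr orbT.
      by move: (Hc yj).
    by move=> x y xK yK; rewrite !allv.
  + have nv : forall x, x \in K -> nm x != v.
      move=> x xK; apply/negP => /eqP E; move/negP: nov; apply.
      by apply/existsP; exists x; rewrite xK E eqxx.
    have mono' : forall x y, x \in K -> y \in K ->
        col' (mrg u v z (nm x)) = col' (mrg u v z (nm y)).
      by move=> x y xK yK; have := mono x y xK yK; rewrite (negbTE (nv x xK)) (negbTE (nv y yK)).
    have eqm := good' K KS Kcl Ks mono'.
    move=> x y xK yK; case: (key x y (eqm x y xK yK)) => // /andP [hx hy].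
    have xu : nm x = u.
      by case/orP: hx => /eqP // E; move: (nv x xK); rewrite E eqxx.
    have yu : nm y = u.
      by case/orP: hy => /eqP // E; move: (nv y yK); rewrite E eqxx.
    by rewrite xu yu.
- exists (fun A => col' (mrg u v z A)); split => //.
  move=> K KS Kcl Ks mono x y xK yK.
  have eqm := good' K KS Kcl Ks mono.
  case: (key x y (eqm x y xK yK)) => // /andP[hx hy].
  case: (eqVneq (nm x) (nm y)) => // nxy; exfalso; apply: nobad.
  exists K; split => //.
  + move=> a aK; case: (key x a (eqm x a xK aK)) => [<- // | /andP[_ ->] //].
  + case/orP: hx => /eqP hx; case/orP: hy => /eqP hy.
    * by move: nxy; rewrite hx hy eqxx.
    * by exists x, y.
    * by exists y, x.
    * by move: nxy; rewrite hx hy eqxx.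
Qed.

Lemma seq_color (V : finType) (e : rel V) d (H : nat -> trigraph {set V}) (S : {set V}) s :
  symmetric e ->
  (forall i, 1 <= i <= #|V| ->
     [/\ wf_trigraph (H i), d_trigraph d (H i) & #|tv (H i)| = i]) ->
  (forall i, 1 < i <= #|V| -> exists u v, contraction (H i) u v (H i.-1)) ->
  (forall K : {set V}, K \subset S -> is_clique e K -> #|K| = s.+1 -> False) ->
  forall i, 1 <= i <= #|V| -> forall nm, valid e (H i) nm ->
    exists col, (forall A, col A < d.+2) /\ good e S s nm col.
Proof.
move=> esym Hp Hc noK; elim=> [|i IH] //.
case: i IH => [|i] IH Hi nm Hv.
- case: (Hp 1 Hi) => _ _ /eqP /cards1P [a tva].
  exists (fun _ => 0); split => // K _ _ _ _ x y _ _.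
  case: Hv => Htv _ _.
  by have := Htv x; have := Htv y; rewrite tva !in_set1 => /eqP -> /eqP ->.
- have Hi' : 1 < i.+2 <= #|V| by move: Hi; lia.
  case: (Hc _ Hi') => u [v [z [[uin vin uv znot tvj] [Hs Hz]]]].
  have Hi1 : 1 <= i.+1 <= #|V| by move: Hi; lia.
  case: (Hp i.+1 Hi1) => wfj dj _.
  apply: (color_contr esym uv znot tvj Hz dj Hv noK).
  apply: IH => //.
  exact: valid_contr znot tvj Hs Hz esym wfj Hv.
Qed.

Lemma split_col (V : finType) (e : rel V) d (S : {set V}) s :
  simple_graph e -> tww_le e d -> 1 < s ->
  (forall K : {set V}, K \subset S -> is_clique e K -> #|K| = s.+1 -> False) ->
  exists f : V -> nat, (forall x, f x < d.+2) /\
    forall K : {set V}, K \subset S -> is_clique e K -> #|K| = s ->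
      (forall x y, x \in K -> y \in K -> f x = f y) -> False.
Proof.
move=> [esym eirr] [H [Hn Hp Hc]] s1 noK.
case: (posnP #|V|) => [V0 | Vpos].
  exists (fun _ => 0); split => // K _ _ Ks _.
  by have := max_card K; rewrite V0 Ks; lia.
have Hv : valid e (H #|V|) (fun x => [set x]).
  rewrite Hn; split => /=.
  - by move=> x; apply/imsetP; exists x.
  - move=> x y /existsP [x' /existsP [y' /and3P [/eqP /set1_inj -> /eqP /set1_inj -> ]]] //.
  - move=> x y _; rewrite /tadj /= orbF; apply: contra => exy.
    by apply/existsP; exists x; apply/existsP; exists y; rewrite !eqxx.
have Hi : 1 <= #|V| <= #|V| by rewrite Vpos leqnn.
case: (seq_color esym Hp Hc noK Hi Hv) => col [colb gd].
exists (fun x => col [set x]); split => // K KS Kcl Ks mono.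
have eqK := gd K KS Kcl Ks mono.
have : #|K| <= 1.
  by apply/card_le1_eqP => x y xK yK; apply: set1_inj; apply: eqK.
by rewrite Ks; lia.
Qed.

Lemma color_gen (V : finType) (e : rel V) d :
  simple_graph e -> tww_le e d -> forall m (S : {set V}),
  (forall K : {set V}, K \subset S -> is_clique e K -> #|K| = m.+2 -> False) ->
  exists c : V -> nat, (forall x, c x < (d.+2) ^ m) /\
    forall x y, x \in S -> y \in S -> e x y -> c x != c y.
Proof.
move=> sg tw; have [esym eirr] := sg.
elim=> [|m IH] S noK.
- exists (fun _ => 0); split => // x y xS yS exy; exfalso.
  have nxy : x != y by apply/eqP => E; rewrite E eirr in exy.
  apply: (noK [set x; y]).
  + by rewrite subUset !sub1set xS yS.
  + apply/forallP => a; apply/implyP => aK; apply/forallP => b;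
    apply/implyP => bK; apply/implyP.
    move: aK bK; rewrite !in_set2 => /orP[] /eqP -> /orP[] /eqP ->;
    by rewrite ?eqxx // esym.
  + by rewrite cards2 nxy.
- case: (split_col (s := m.+2) sg tw _ noK) => // f [fb fK].
  have IHc : forall a : nat, exists c : V -> nat, (forall x, c x < (d.+2) ^ m) /\
      forall x y, x \in [set x in S | f x == a] -> y \in [set x in S | f x == a] ->
        e x y -> c x != c y.
    move=> a; apply: IH => K KS Kcl Ks; apply: (fK K _ Kcl Ks).
    + apply: subset_trans KS _; apply/subsetP => x; rewrite inE => /andP[] //.
    + move=> x y xK yK; move: (subsetP KS x xK) (subsetP KS y yK).
      by rewrite !inE => /andP[_ /eqP ->] /andP[_ /eqP ->].
  pose cc a := proj1_sig (constructive_indefinite_description _ (IHc a)).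
  have ccP a := proj2_sig (constructive_indefinite_description _ (IHc a)).
  exists (fun x => f x * (d.+2) ^ m + cc (f x) x); split.
  + move=> x; have := fb x; have := (ccP (f x)).1 x; rewrite expnS -/(cc _); nia.
  + move=> x y xS yS exy; case: (eqVneq (f x) (f y)) => [fe | fne].
    * rewrite fe eqn_add2l; have := (ccP (f y)).2 x y; rewrite -/(cc _).
      by rewrite !inE xS yS fe eqxx /=; apply.
    * apply/eqP => E; move/eqP: fne => fne.
      have := (ccP (f x)).1 x; have := (ccP (f y)).1 y; rewrite -!/(cc _).
      nia.
Qed.

Theorem mainTheorem10 :
  (forall (t d : nat), 3 <= t ->
     forall (V : finType) (e : rel V),
       simple_graph e -> tww_le e d ->
       ~ (exists K : {set V}, is_clique e K /\ #|K| = t) ->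
       colorable e ((d + 2) ^ (t - 2)))
  /\
  (forall d : nat, exists f : nat -> nat,
     forall (V : finType) (e : rel V),
       simple_graph e -> tww_le e d -> colorable e (f (omega e))).
Proof.
have gen : forall t d (V : finType) (e : rel V), 2 <= t ->
    simple_graph e -> tww_le e d ->
    ~ (exists K : {set V}, is_clique e K /\ #|K| = t) ->
    colorable e ((d + 2) ^ (t - 2)).
  move=> t d V e t2 sg tw noK.
  have tE : (t - 2).+2 = t by move: t2; lia.
  have [c [cb cp]] := color_gen sg tw (m := t - 2) (S := setT)
    (fun K _ Kcl Ks => noK (ex_intro _ K (conj Kcl (etrans Ks tE)))).
  have cb' : forall x, c x < (d + 2) ^ (t - 2) by move=> x; rewrite addn2.
  exists (fun x => Ordinal (cb' x)) => x y exy.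
  by apply: (cp x y) => //; rewrite inE.
split.
  by move=> t d t3 V e; apply: gen; apply: leq_trans t3.
move=> d; exists (fun w => (d + 2) ^ (maxn 2 w.+1 - 2)) => V e sg tw /=.
apply: (gen (maxn 2 (omega e).+1) d V e) => //; first by rewrite leq_maxl.
case=> K [Kcl Ks].
have : #|K| <= omega e.
  exact: (@leq_bigmax_cond _ (fun K => is_clique e K) (fun K : {set V} => #|K|) K Kcl).
rewrite Ks; lia.
Qed.
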